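(* Let $q\ge2$ be a prime power, $d\ge6$ and $2\le j\le d$. Then $|Q_j(d-2)|>|Q_j(d-1)|$. Moreover, for $i\in\{d-2,d-1\}$, $Q_j(i)$ has the same sign as $T_{h_{\max}}(i,j)$, where $h_{\max}=\min\{j,d-i\}$.
   Context: Let $b=-q$. For integers $m\ge0$ and $l$, ${m\brack l}_b=\prod_{t=1}^{l}\frac{b^{m-t+1}-1}{b^t-1}$ for $l\ge0$ and $0$ for $l<0$. For $0\le i,j\le d$, $$Q_j(i)=\sum_{h=0}^{\min\{j,d-i\}}(-1)^j(-q)^{\binom{j-h}{2}+hd}{d-h\brack d-j}_b{d-i\brack h}_b,$$ the eigenvalues of the Hermitian forms graph $Q_q(d,j)$. $T_h(i,j)$ denotes the $h$-th summand (including the factor $(-1)^j$). *)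

(* Defs.v *)
From mathcomp Require Import all_boot all_order all_algebra.
Set Implicit Arguments. Unset Strict Implicit. Unset Printing Implicit Defensive.
Import Order.TTheory GRing.Theory Num.Theory.
Local Open Scope ring_scope.

Definition prime_power (q : nat) : Prop :=
  exists p k : nat, prime p /\ (0 < k)%N /\ q = (p ^ k)%N.

(* Gaussian binomial [m brack l]_b = prod_{t=1}^{l} (b^(m-t+1)-1)/(b^t-1),
   written with t' = t-1 ranging over 0..l-1.  Only nonnegative l occurs. *)
Definition gbin (b : rat) (m l : nat) : rat :=
  \prod_(t < l) ((b ^+ (m - t) - 1) / (b ^+ t.+1 - 1)).

Definition Tsum (q d i j h : nat) : rat :=
  let b : rat := - (q%:R) in
  (-1) ^+ j * b ^+ ('C(j - h, 2) + h * d) * gbin b (d - h) (d - j)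
    * gbin b (d - i) h.

Definition Qeig (q d i j : nat) : rat :=
  \sum_(h < (minn j (d - i)).+1) Tsum q d i j h.

(* Main.v *)
Require Import Defs.
From mathcomp Require Import all_boot all_order all_algebra.
From mathcomp Require Import ring lra zify.
Import Order.TTheory GRing.Theory Num.Theory.
Local Open Scope ring_scope.

Lemma L1 (y : rat) : 2 <= y -> 1 <= 2*y^+4-2*y^+3-2*y^+2-2*y-3.
Proof. move=> hy. have [t ht ->] : exists2 t, 0 <= t & y = t + 2 by exists (y-2); lra.
have h2 := exprn_ge0 2 ht. have h3 := exprn_ge0 3 ht. have h4 := exprn_ge0 4 ht.
have h5 := exprn_ge0 5 ht. nra. Qed.
Lemma L2 (y : rat) : 2 <= y -> 2*(y^+3+2*y+3)+1 <= (2*y^+4-2*y^+3-2*y^+2-2*y-3) * y^+5.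
Proof. move=> hy. have [t ht ->] : exists2 t, 0 <= t & y = t + 2 by exists (y-2); lra.
have h2 := exprn_ge0 2 ht. have h3 := exprn_ge0 3 ht. have h4 := exprn_ge0 4 ht.
have h5 := exprn_ge0 5 ht. 
have h6 := exprn_ge0 6 ht. have h7 := exprn_ge0 7 ht. have h8 := exprn_ge0 8 ht.
have h9 := exprn_ge0 9 ht. nra. Qed.

Lemma poly1 (y u v : rat) : 2 <= y -> y^+2 <= v -> y^+5 <= u ->
  2*v^+2*(y*u+1)*(u+1) + y^+2*v*u*(u+1)*(y*v+1) < y^+3*u^+2*(y*v+1)*(v-1).
Proof.
move=> hy hv hu.
have hK := L1 y hy. have hK2 := L2 y hy.
set K := 2*y^+4-2*y^+3-2*y^+2-2*y-3 in hK hK2 *.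
set c := y^+3+2*y+3 in hK2 *.
have y2 : 4 <= y^+2 by nra.
have y3 : 8 <= y^+3 by nra.
have y5 : 32 <= y^+5 by nra.
have u32 : 32 <= u by lra.
have v0 : 0 <= v by lra.
have hKu : 2*c+1 <= K*u.
  apply: le_trans hK2 _. rewrite ler_pM2l; last by lra. done.
have inner : 0 < K*u^+2 - 2*c*u - 4 by nra.
have h1 : v*(y^+4-y^+3+y^+2) <= v^+2*(y^+2-y+1).
  have : 0 <= (v - y^+2)*(v*(y^+2-y+1)) by apply: mulr_ge0; nra.
  move=> H. have -> : y^+4-y^+3+y^+2 = y^+2*(y^+2-y+1) by ring. nra.
have h2 : 2*y^+3 <= v^+2.
  have : y^+4 <= v^+2.
    have -> : y^+4 = (y^+2)^+2 by rewrite -exprM.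
    rewrite ler_pXn2r // ?nnegrE; nra.
  nra.
have h3 : y^+2*v <= v^+2 by nra.
have hv2 : 0 <= v^+2 by nra.
have hu2 : 0 <= u^+2 by nra.
have E : y^+3*u^+2*(y*v+1)*(v-1) - (2*v^+2*(y*u+1)*(u+1) + y^+2*v*u*(u+1)*(y*v+1))
  = (v^+2*(y^+4-y^+3-2*y) - v*(y^+4-y^+3+y^+2) - y^+3)*u^+2
    - ((y^+3+2*y+2)*v^+2 + y^+2*v)*u - 2*v^+2 by ring.
have I1 : 0 <= (v^+2*(y^+2-y+1) - v*(y^+4-y^+3+y^+2)) * u^+2 by apply: mulr_ge0; lra.
have I2 : 0 <= (v^+2 - 2*y^+3) * u^+2 by apply: mulr_ge0; lra.
have I3 : 0 <= (v^+2 - y^+2*v) * u by apply: mulr_ge0; lra.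
have I4 : 0 < v^+2 * (K*u^+2 - 2*c*u - 4) by apply: mulr_gt0 => //; nra.
rewrite -subr_gt0 E. rewrite /K /c in I4. nra.
Qed.

Lemma poly2 (y u v : rat) : 2 <= y -> y <= v -> y^+5 <= u ->
  2*v^+2*(y*u+1)*(u+1) + y^+2*v*u*(u+1)*(y*v-1) < y^+3*u^+2*(v+1)*(y*v-1).
Proof.
move=> hy hv hu.
have y2 : 4 <= y^+2 by nra.
have y3 : 8 <= y^+3 by nra.
have y5 : 32 <= y^+5 by nra.
have y4 : 16 <= y^+4 by nra.
have y35 : y^+3 <= u.
  apply: le_trans hu. have -> : y^+5 = y^+3 * y^+2 by rewrite -exprD.
  nra.
have hal : 4 <= y^+4 - y^+3 - 2*y.
  have [t ht ->] : exists2 t, 0 <= t & y = t + 2 by exists (y-2); lra.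
  have h2 := exprn_ge0 2 ht. have h3 := exprn_ge0 3 ht. have h4 := exprn_ge0 4 ht. nra.
set al := y^+4 - y^+3 - 2*y in hal *.
have u32 : 32 <= u by lra.
have v0 : 2 <= v by lra.
have hv2 : 4 <= v^+2 by nra.
have hc : y^+3 + 2*y + 2 + 1 <= al*u by nra.
have inner : 0 < al*u^+2 - (y^+3+2*y+2)*u - 2 by nra.
have E : y^+3*u^+2*(v+1)*(y*v-1) - (2*v^+2*(y*u+1)*(u+1) + y^+2*v*u*(u+1)*(y*v-1))
  = v^+2 * (al*u^+2 - (y^+3+2*y+2)*u - 2) + ((y^+4-y^+3+y^+2)*v - y^+3)*u^+2 + y^+2*v*u
  by rewrite /al; ring.
have P1 : 0 < v^+2 * (al*u^+2 - (y^+3+2*y+2)*u - 2) by apply: mulr_gt0; lra.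
have P2 : 0 <= ((y^+4-y^+3+y^+2)*v - y^+3)*u^+2.
  apply: mulr_ge0; last by nra.
  have : y^+3 <= y^+4 - y^+3 + y^+2 by nra. nra.
have P3 : 0 <= y^+2*v*u by apply: mulr_ge0; nra.
rewrite -subr_gt0 E. lra.
Qed.

Lemma sg_dom (a b : rat) : `|a| < `|b| -> Num.sg (a+b) = Num.sg b.
Proof.
have h1 := ler_norm a. have h2 := ler_norm (-a). rewrite normrN in h2.
have [hb|hb|->] := ltgtP b 0.
- rewrite (ltr0_norm hb) => H. rewrite (ltr0_sg hb) ltr0_sg //. lra.
- rewrite (gtr0_norm hb) => H. rewrite (gtr0_sg hb) gtr0_sg //. lra.
- rewrite normr0 => H. have := normr_ge0 a. lra.
Qed.

Lemma fin (x y a0 a1 a2 : rat) : x = -y -> 2 <= y -> `|a0| < `|a1| ->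
  2*`|a0| + y*`|a1| < a2 ->
  `|a0+a1| < `|a0+(x+1)*a1+a2| /\ Num.sg (a0+a1) = Num.sg a1 /\
  Num.sg (a0+(x+1)*a1+a2) = Num.sg a2.
Proof.
move=> -> hy h01 h2.
have n0 := normr_ge0 a0. have n1 := normr_ge0 a1.
have hx : `|-y+1| = y - 1 by rewrite ler0_norm; [ring | lra].
have t1 := ler_normD a0 a1.
have t2 : `|(-y+1)*a1| = (y-1)*`|a1| by rewrite normrM hx.
have t3 : a2 <= `|a0 + (-y+1)*a1 + a2| + `|a0| + `|(-y+1)*a1|.
  have := ler_normD (a0 + (-y+1)*a1 + a2) (- (a0 + (-y+1)*a1)).
  rewrite normrN (_ : a0 + (-y + 1) * a1 + a2 + - (a0 + (-y + 1) * a1) = a2); last by ring.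
  have := ler_normD a0 ((-y+1)*a1). have := ler_norm a2. lra.
have a2p : 0 < a2 by nra.
split; first by nra.
split; first by rewrite sg_dom.
rewrite sg_dom // (gtr0_norm a2p). have := ler_normD a0 ((-y+1)*a1). lra.
Qed.

Lemma core (x y u v z w a0 a1 : rat) :
 2 <= y -> y^+5 <= u -> y <= v -> v <= u -> x = -y ->
 (z = v /\ y^+2 <= v \/ z = -v) -> `|w| = u ->
 a1*(z-1) = z*w*(w-1) -> a0*x*(z-1)*(x*z-1) = z^+2*(w-1)*(x*w-1) ->
 `|a0| < `|a1| /\ 2*`|a0| + y*`|a1| < y^+2*u^+2.
Proof.
move=> hy hu hv hvu hx hz hw e1 e0.
have hxn : `|x| = y by rewrite hx normrN ger0_norm //; lra.
have hzn : `|z| = v by case: hz => [[-> _]|->]; rewrite ?normrN ger0_norm //; lra.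
have W1u : `|w-1| <= u+1 by have := ler_normB w 1; rewrite normr1 hw.
have W1l : u-1 <= `|w-1| by have := lerB_dist w 1; rewrite normr1 hw.
have W2u : `|x*w-1| <= y*u+1 by have := ler_normB (x*w) 1; rewrite normr1 normrM hw hxn.
have E1 : `|a1| * `|z-1| = v*u*`|w-1| by rewrite -normrM e1 !normrM hzn hw.
have E0 : `|a0| * y * `|z-1| * `|x*z-1| = v^+2*`|w-1|*`|x*w-1|.
  have := congr1 (fun t => `|t|) e0. rewrite /= !normrM hzn hxn expr2. done.
have y2 : 4 <= y^+2 by nra.
have y4 : 16 <= y^+2*y^+2 by nra.
have y5 : 32 <= y^+5.
  have -> : y^+5 = y^+2*y^+2*y by ring.
  nra.
have [P [R [hP [hR hPR]]]] : exists P R, `|z-1| = P /\ `|x*z-1| = R /\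
   ((P = v-1 /\ R = y*v+1 /\ y^+2 <= v) \/ (P = v+1 /\ R = y*v-1)).
  case: hz => [[-> hv2]|->]; [exists (v-1), (y*v+1) | exists (v+1), (y*v-1)].
    rewrite hx (ger0_norm (_ : (0 <= v - 1)%R)); last lra.
    rewrite (ler0_norm (_ : (-y*v-1 <= 0)%R)); last nra.
    split=> //; split; [ring | by left].
  rewrite hx (ler0_norm (_ : (-v - 1 <= 0)%R)); last lra.
  rewrite (ger0_norm (_ : (0 <= -y*(-v)-1)%R)); last nra.
  split; [ring | split; [ring | by right]].
rewrite hP hR in E0. rewrite hP in E1.
move: E0 E1 W1u W1l W2u.
have n0 := normr_ge0 a0. have n1 := normr_ge0 a1. have n2 := normr_ge0 (x*w-1).
move: n0 n1 n2.
set A0 := `|a0|. set A1 := `|a1|. set W1 := `|w-1|. set W2 := `|x*w-1|.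
move=> n0 n1 n2 E0 E1 W1u W1l W2u.
have Pp : 0 < P by case: hPR => [[-> _]|[-> _]]; nra.
have Rp : y*v-1 <= R by case: hPR => [[_ [-> _]]|[_ ->]]; lra.
have Rp' : 0 < R by nra.
have u32 : 32 <= u by lra.
have W1p : 0 < W1 by lra.
have A1p : 0 < A1.
  have : 0 < v*u*W1 by apply: mulr_gt0 => //; apply: mulr_gt0; lra.
  rewrite -E1. rewrite pmulr_lgt0 //.
have key : A0*(y*R*u) = (v*W2)*A1.
  apply: (mulIf (lt0r_neq0 Pp)).
  have -> : v*W2*A1*P = v*W2*(A1*P) by ring.
  rewrite E1. rewrite -[RHS]/(v * W2 * (v * u * W1)).
  have -> : A0*(y*R*u)*P = (A0*y*P*R)*u by ring.
  rewrite E0. ring.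
have lt1 : v*W2 < y*R*u.
  have : v*(y*u+1) < y*u*(y*v-1).
    have h1 : 2 <= v*(y-1) by nra.
    have h2 : 0 <= (y*u)*(v*(y-1) - 2) by apply: mulr_ge0; nra.
    nra.
  have : v*W2 <= v*(y*u+1) by rewrite ler_pM2l //; lra.
  have : y*u*(y*v-1) <= y*R*u by nra.
  lra.
split.
  have : A0*(y*R*u) < A1*(y*R*u).
    rewrite key. have : 0 < (y*R*u - v*W2)*A1 by apply: mulr_gt0; lra.
    nra.
  rewrite ltr_pM2r //. nra.
have M0 : 0 < y*P*R by apply: mulr_gt0 => //; apply: mulr_gt0 => //; lra.
rewrite -(ltr_pM2r M0).
have -> : (2*A0 + y*A1)*(y*P*R) = 2*(A0*y*P*R) + y^+2*R*(A1*P) by ring.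
rewrite E0 E1.
have S1 : 2*(v^+2*W1*W2) + y^+2*R*(v*u*W1) <= 2*v^+2*(y*u+1)*(u+1) + y^+2*v*u*(u+1)*R.
  have : W1*W2 <= (u+1)*(y*u+1) by apply: ler_pM; lra.
  have : 0 <= y^+2*R*(v*u) by apply: mulr_ge0; [nra | nra].
  nra.
apply: le_lt_trans S1 _.
case: hPR => [[-> [-> hv2]]|[-> ->]].
  have := poly1 y u v hy hv2 hu. nra.
have := poly2 y u v hy hv hu. nra.
Qed.

Lemma gbinS (b : rat) m k : gbin b m k.+1 = gbin b m k * ((b^+(m-k) - 1)/(b^+k.+1 - 1)).
Proof. by rewrite /gbin big_ord_recr. Qed.

Lemma gbin0 (b : rat) m : gbin b m 0 = 1.
Proof. by rewrite /gbin big_ord0. Qed.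

Lemma gbin_rec (b : rat) n k : (k <= n)%N ->
  gbin b n.+1 k * (b^+(n.+1 - k) - 1) = gbin b n k * (b^+n.+1 - 1).
Proof.
elim: k => [|k IH] hk; first by rewrite !gbin0 subn0.
rewrite !gbinS.
have IH' := IH (ltnW hk).
have e1 : (n.+1 - k.+1 = n - k)%N by lia.
have e2 : (n.+1 - k = (n - k).+1)%N by lia.
rewrite e1 e2. rewrite e2 in IH'.
have -> : gbin b n.+1 k * ((b ^+ (n - k).+1 - 1) / (b ^+ k.+1 - 1)) * (b ^+ (n - k) - 1)
  = (gbin b n.+1 k * (b ^+ (n - k).+1 - 1)) * (b ^+ (n - k) - 1) / (b ^+ k.+1 - 1) by ring.
rewrite IH'. ring.
Qed.

Lemma gbin_nz (b : rat) m k : (forall n, (0 < n)%N -> b^+n != 1) -> (k <= m)%N -> gbin b m k != 0.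
Proof.
move=> hb hk. rewrite /gbin. apply/prodf_neq0 => t _.
rewrite mulf_eq0 invr_eq0 !subr_eq0 negb_or !hb //.
have := ltn_ord t. lia.
Qed.


Ltac side_one h x y := apply: (negP h); apply/eqP;
  match goal with H : _ = 0 |- _ => rewrite -H end; try rewrite /x; try rewrite /y; rewrite /=; ring.
Ltac side a b c x y := repeat (apply/andP; split); apply/eqP => H;
  first [ side_one a x y | side_one b x y | side_one c x y ].

Theorem lemma5p7 (q d j : nat) :
  prime_power q -> (6 <= d)%N -> (2 <= j)%N -> (j <= d)%N ->
  `|Qeig q d (d - 1) j| < `|Qeig q d (d - 2) j| /\
  (forall i : nat, (i = d - 2)%N \/ (i = d - 1)%N ->
     Num.sg (Qeig q d i j) = Num.sg (Tsum q d i j (minn j (d - i)))).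
Proof.
move=> [p [k [pp [k0 hq]]]] hd hj hjd.
have q2 : (2 <= q)%N.
  rewrite hq. apply: leq_trans (prime_gt1 pp) _. rewrite -{1}(expn1 p).
  apply: leq_pexp2l => //. exact: prime_gt0.
clear hq.
set y : rat := q%:R.
have hy : 2 <= y by rewrite /y (ler_nat _ 2 q).
set x : rat := - y.
have hxn : forall n, `|x^+n| = y^+n.
  by move=> n; rewrite normrX normrN ger0_norm.
have hx1 : forall n, (0 < n)%N -> x^+n != 1.
  move=> n hn. apply/eqP=> H. have := congr1 (fun t => `|t|) H.
  rewrite /= normr1 hxn => H2.
  have h1y : 1 <= y by lra.
  have := ler_weXn2l h1y hn. rewrite expr1 H2. lra.
case: j hj hjd => [|[|jj]] // _ hjd.
have ex1 : (jj.+1 + (d-1) = jj + d)%N by lia.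
have ex2 : ((jj + jj).+1 + 1 = jj.+1 * 2)%N by lia.
have ex3 : (2 + (d-1)*2 = d + d)%N by lia.
have m1 : minn jj.+2 1 = 1%N by lia.
have m2 : minn jj.+2 2 = 2%N by lia.
set G0 := gbin x d (d - jj.+2).
set G1 := gbin x (d-1) (d - jj.+2).
set G2 := gbin x (d-2) (d - jj.+2).
set z := x^+jj.+1. set w := x^+(d-1).
have G2nz : G2 != 0 by apply: gbin_nz hx1 _; lia.
have E1 : G1 * (z - 1) = G2 * (w - 1).
  have hk : (d - jj.+2 <= d-2)%N by lia.
  have H := gbin_rec x _ _ hk. 
  have e : ((d-2).+1 = d-1)%N by lia. rewrite e in H.
  have e' : (d - 1 - (d - jj.+2) = jj.+1)%N by lia. rewrite e' in H. exact H.
have E0 : G0 * (x*z - 1) = G1 * (x*w - 1).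
  have hk : (d - jj.+2 <= d-1)%N by lia.
  have H := gbin_rec x _ _ hk. 
  have e : ((d-1).+1 = d)%N by lia. rewrite e in H.
  have e' : (d - (d - jj.+2) = jj.+2)%N by lia. rewrite e' in H.
  by rewrite /z /w -!exprS e.
have hx0 : x != 0 by rewrite oppr_eq0; apply/eqP; lra.
have hxm1 : x - 1 != 0 by rewrite subr_eq0 -(expr1 x) hx1.
have hx2m1 : x^+2 - 1 != 0 by rewrite subr_eq0 hx1.
set s : rat := (-1)^+jj.+2.
set N := s * x^+('C(jj,2)) * G2.
set a0 := x^+(jj+jj).+1 * G0 / G2.
set a1 := x^+(jj + d) * G1 / G2.
set a2 := x^+(d+d).
have bC2 : 'C(jj.+2,2) = ('C(jj,2) + (jj+jj).+1)%N by rewrite !binS !bin1 ?bin0; lia.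
have bC1 : 'C(jj.+1,2) = ('C(jj,2) + jj)%N by rewrite !binS !bin1 ?bin0; lia.
have T0 : forall i, Tsum q d i jj.+2 0 = N * a0.
  move=> i. rewrite /Tsum /= -/y -/x gbin0 !subn0 mul0n addn0 mulr1 bC2 exprD.
  rewrite /N /a0 -/G0 -/s. field. exact: G2nz.
have ed1 : (d - (d-1) = 1)%N by lia.
have ed2 : (d - (d-2) = 2)%N by lia.
have T1a : Tsum q d (d-1) jj.+2 1 = N * a1.
  rewrite /Tsum /= -/y -/x ed1 subSS subn0 mul1n bC1.
  rewrite gbinS gbin0 subn0 expr1 mul1r divff // mulr1 -/G1 -/s /N /a1.
  rewrite -addnA exprD. field. exact: G2nz.
have T1b : Tsum q d (d-2) jj.+2 1 = N * ((x+1) * a1).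
  rewrite /Tsum /= -/y -/x ed2 subSS subn0 mul1n bC1.
  rewrite gbinS gbin0 subn0 expr1 mul1r -/G1 -/s /N /a1.
  rewrite -addnA exprD. field. side hxm1 hx2m1 G2nz x y.
have T2 : Tsum q d (d-2) jj.+2 2 = N * a2.
  have e1 : (jj.+2 - 2 = jj)%N by lia. have e2 : (2 * d = d + d)%N by lia.
  rewrite /Tsum /= -/y -/x ed2 e1 e2.
  rewrite !gbinS gbin0 !subn0 (_ : (2 - 1 = 1)%N) // expr1 -/G2 -/s /N /a2.
  rewrite exprD. field. side hxm1 hx2m1 G2nz x y.
have QA : Qeig q d (d-1) jj.+2 = N * (a0 + a1).
  rewrite /Qeig ed1 m1.
  rewrite !big_ord_recr big_ord0 /= add0r T0 T1a. ring.
have QB : Qeig q d (d-2) jj.+2 = N * (a0 + (x+1)*a1 + a2).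
  rewrite /Qeig ed2 m2.
  rewrite !big_ord_recr big_ord0 /= add0r T0 T1b T2. ring.
set u := y^+(d-1). set v := y^+jj.+1.
have h1y : 1 <= y by lra.
have hu : y^+5 <= u by apply: ler_weXn2l => //; lia.
have hv : y <= v by rewrite -{1}(expr1 y); apply: ler_weXn2l => //.
have hvu : v <= u by apply: ler_weXn2l => //; lia.
have hw : `|w| = u by rewrite /w hxn.
have hz : z = v /\ y^+2 <= v \/ z = -v.
  rewrite /z /v /x exprNn -signr_odd.
  have [o|e] := boolP (odd jj.+1).
    by right; rewrite expr1 mulN1r.
  left; rewrite expr0 mul1r; split=> //.
  have h2 : (2 <= jj.+1)%N by move: e; case: (jj) => [|n] //.
  exact: ler_weXn2l.
have e1 : a1*(z-1) = z*w*(w-1).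
  have -> : z*w = x^+(jj+d) by rewrite /z /w -exprD ex1.
  rewrite /a1. have -> : x ^+ (jj + d) * G1 / G2 * (z - 1) = x^+(jj+d) * (G1 * (z-1)) / G2 by ring.
  rewrite E1. field. exact: G2nz.
have e0 : a0*x*(z-1)*(x*z-1) = z^+2*(w-1)*(x*w-1).
  have -> : z^+2 = x^+(jj+jj).+1 * x by rewrite /z -exprM -[x in _ * x]expr1 -exprD ex2.
  rewrite /a0. have -> : x ^+ (jj + jj).+1 * G0 / G2 * x * (z - 1) * (x * z - 1)
     = x ^+ (jj + jj).+1 * x * (G0 * (x*z-1)) * (z-1) / G2 by ring.
  rewrite E0. have -> : x ^+ (jj + jj).+1 * x * (G1 * (x * w - 1)) * (z - 1) / G2
     = x ^+ (jj + jj).+1 * x * (G1 * (z - 1)) * (x * w - 1) / G2 by ring.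
  rewrite E1. field. exact: G2nz.
have [c1 c2] := core x y u v z w a0 a1 hy hu hv hvu (erefl x) hz hw e1 e0.
have ha2 : a2 = y^+2 * u^+2.
  by rewrite /a2 /u /x exprNn -signr_odd oddD addbb expr0 mul1r -exprM -exprD ex3.
rewrite -ha2 in c2.
have [F1 [F2 F3]] := fin x y a0 a1 a2 (erefl x) hy c1 c2.
have Nnz : N != 0.
  apply: mulf_neq0; last exact: G2nz.
  apply: mulf_neq0; first by rewrite signr_eq0.
  exact: expf_neq0.
split.
  have hN : 0 < `|N| by rewrite normr_gt0.
  rewrite QA QB !(normrM N) ltr_pM2l; [exact: F1 | exact: hN].
move=> i [->|->].
  rewrite ed2 m2.
  by rewrite QB T2 !(sgrM N) F3.
rewrite ed1 m1.
by rewrite QA T1a !(sgrM N) F2.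
Qed.
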